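(* Every connected graph $G$ with at least $2$ vertices has a connecting transition set of size $|V(G)|-2$.
   Context: All graphs are finite, simple and undirected. A transition of a graph $G$ is an unordered pair $\{ab,bc\}$ of two distinct edges of $G$ sharing the vertex $b$ (so $a\neq c$); it is written $abc$. A walk in $G$ is a sequence $(v_1,\dots,v_k)$ of vertices with $v_iv_{i+1}\in E(G)$ for all $i\le k-1$; it leads from $v_1$ to $v_k$. For a set $T$ of transitions of $G$, a walk $(v_1,\dots,v_k)$ is $T$-compatible if for every $i\in[1,k-2]$, either $v_i=v_{i+2}$ or $v_iv_{i+1}v_{i+2}\in T$. The graph $G$ is $T$-connected, and $T$ is a connecting transition set of $G$, if for all vertices $u,v$ of $G$ there is a $T$-compatible walk leading from $u$ to $v$. *)

(* Defs.v *)
From HB Require Import structures.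
From mathcomp Require Import all_boot.
Set Implicit Arguments. Unset Strict Implicit. Unset Printing Implicit Defensive.

Definition simple_graph (V : finType) (e : rel V) : Prop :=
  symmetric e /\ irreflexive e.

Definition graph_connected (V : finType) (e : rel V) : Prop :=
  forall u v : V, connect e u v.

(* A transition {ab, bc} (written abc, with a <> c) is encoded as the pair
   (b, [set a; c]) : middle vertex and the unordered pair of end vertices.
   This encoding identifies abc and cba, as the unordered pair of edges does. *)
Definition transition (V : finType) := (V * {set V})%type.

Definition is_transition (V : finType) (e : rel V) (t : transition V) : Prop :=
  exists a c : V, [/\ a != c, e a t.1, e t.1 c & t.2 = [set a; c]].

Definition transition_set (V : finType) (e : rel V) (T : {set transition V}) : Prop :=
  forall t, t \in T -> is_transition e t.

(* A walk (v_1, ..., v_k), k >= 1, is represented as x :: p with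
   v_1 = x; it is a walk iff path e x p, and it leads from x to last x p. *)
Definition walk_from_to (V : finType) (e : rel V) (x : V) (p : seq V) (u v : V) : Prop :=
  [/\ x = u, path e x p & last x p = v].

(* T-compatibility of the walk w = x :: p: for every index i (0-based) with
   i+2 < size w, either w_i = w_{i+2} or the transition w_i w_{i+1} w_{i+2}
   belongs to T. (Default element x of nth is irrelevant as indices are in range.) *)
Definition T_compatible (V : finType) (T : {set transition V}) (x : V) (p : seq V) : Prop :=
  let w := x :: p in
  forall i : nat, i.+2 < size w ->
    (nth x w i == nth x w i.+2)
    || ((nth x w i.+1, [set nth x w i; nth x w i.+2]) \in T).

Definition T_connected (V : finType) (e : rel V) (T : {set transition V}) : Prop :=
  forall u v : V, exists (x : V) (p : seq V), walk_from_to e x p u v /\ T_compatible T x p.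

Definition connecting_transition_set (V : finType) (e : rel V) (T : {set transition V}) : Prop :=
  transition_set e T /\ T_connected e T.

(* Main.v *)
Require Import Defs.
From HB Require Import structures.
From mathcomp Require Import all_boot.
From mathcomp Require Import zify.
Set Implicit Arguments. Unset Strict Implicit. Unset Printing Implicit Defensive.

Definition okt (V : finType) (T : {set transition V}) (a b c : V) : bool :=
  (a == c) || ((b, [set a; c]) \in T).

Fixpoint cp (V : finType) (T : {set transition V}) (s : seq V) : bool :=
  match s with
  | a :: ((b :: c :: _) as t) => okt T a b c && cp T t
  | _ => true
  end.

Lemma cp3 (V : finType) (T : {set transition V}) a b c t :
  cp T [:: a, b, c & t] = okt T a b c && cp T [:: b, c & t].
Proof. by []. Qed.

Lemma cpP (V : finType) (T : {set transition V}) (x0 : V) (s : seq V) :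
  cp T s <-> (forall i, i.+2 < size s ->
     okt T (nth x0 s i) (nth x0 s i.+1) (nth x0 s i.+2)).
Proof.
elim: s => [|a t IH]; first by split.
case: t IH => [|b [|c t']] IH; try by split => // _ [|[|i]].
rewrite cp3; split.
- move=> /andP [H1 H2] [|i] Hi //=.
  by move/IH: H2 => H2; apply: H2.
- move=> H; apply/andP; split; first exact: (H 0).
  by apply/IH => i Hi; apply: (H i.+1).
Qed.

Lemma okt_sym (V : finType) (T : {set transition V}) a b c :
  okt T a b c = okt T c b a.
Proof. by rewrite /okt eq_sym setUC. Qed.

Lemma cp_rev (V : finType) (T : {set transition V}) s :
  cp T s -> cp T (rev s).
Proof.
case: s => [|x0 s'] //; set s := x0 :: s'.
move/(cpP T x0) => H; apply/(cpP T x0) => i; rewrite size_rev => Hi.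
rewrite !nth_rev //; try by apply: ltn_trans Hi.
rewrite okt_sym.
have := H (size s - i.+3); rewrite /=.
have -> : size s - i.+1 = (size s - i.+3).+2 by rewrite /s /= in Hi *; lia.
have -> : size s - i.+2 = (size s - i.+3).+1 by rewrite /s /= in Hi *; lia.
apply; rewrite /s /= in Hi *; lia.
Qed.

Lemma cp_glue (V : finType) (T : {set transition V}) a b t x s :
  cp T (x :: s ++ [:: a; b]) -> cp T [:: a, b & t] -> cp T (x :: s ++ [:: a, b & t]).
Proof.
elim: s x => [|y s IH] x.
- by rewrite cat0s !cp3 => /andP [H1 _] H2; rewrite H1.
- case: s IH => [|z s] IH; rewrite !cat_cons ?cat0s !cp3 => /andP [H1 H3] H2;
    rewrite H1 /=.
  + by have := IH y; rewrite !cat0s; apply.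
  + by apply: (IH y).
Qed.

Lemma sorted_glue (V : finType) (e : rel V) a b t x s :
  sorted e (x :: s ++ [:: a; b]) -> sorted e [:: a, b & t] -> sorted e (x :: s ++ [:: a, b & t]).
Proof.
rewrite /= !cat_path /= => /and3P [-> -> _] /andP [-> ->].
by [].
Qed.

Definition tr (V : finType) (r v2 : V) (p : V -> V) (v : V) : transition V :=
  if p v == r then (r, [set v2; v]) else (p v, [set p (p v); v]).

Fixpoint up (V : finType) (r v2 : V) (p : V -> V) (n : nat) (v : V) : seq V :=
  match n with
  | 0 => [:: r; v2; r]
  | n'.+1 => if v == r then [:: r; v2; r] else v :: up r v2 p n' (p v)
  end.

Lemma up_head (V : finType) (r v2 : V) p m v : exists s, up r v2 p m.+1 v = v :: s.
Proof. by rewrite /=; case: ifP => [/eqP ->|_]; eexists. Qed.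

Lemma up_suffix (V : finType) (r v2 : V) p n v : exists s, up r v2 p n v = s ++ [:: r; v2; r].
Proof.
elim: n v => [|n IH] v; first by exists [::].
rewrite /=; case: ifP => _; first by exists [::].
by have [s ->] := IH (p v); exists (v :: s).
Qed.

Lemma tree_lemma (V : finType) (e : rel V) (esym : symmetric e) (r v2 : V)
  (p : V -> V) (d : V -> nat)
  (Hrv2 : r != v2) (Hp2 : p v2 = r)
  (Hp : forall v, v != r -> e v (p v) && (d (p v) < d v)) :
  exists T : {set transition V}, connecting_transition_set e T /\ #|T| = #|V| - 2.
Proof.
pose S := [set v | (v != r) && (v != v2)].
pose T := [set tr r v2 p v | v in S].
have Hpp : forall v, v != r -> p v != r -> p (p v) != v.
  move=> v Hv Hpv; have /andP [_ h1] := Hp v Hv; have /andP [_ h2] := Hp _ Hpv.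
  by apply/eqP => E; move: (ltn_trans h2 h1); rewrite E ltnn.
have trS : forall v, v != r -> v != v2 -> tr r v2 p v \in T.
  by move=> v H1 H2; apply: imset_f; rewrite inE H1 H2.
have Hev2 : e v2 r.
  have : v2 != r by rewrite eq_sym.
  by move/Hp/andP => [h _]; rewrite Hp2 in h.
exists T; split; last first.
  rewrite card_in_imset.
    have := cardsC [set r; v2]; rewrite cards2 Hrv2.
    have -> : S = ~: [set r; v2] by apply/setP => v; rewrite !inE negb_or.
    lia.
  move=> v w; rewrite !inE => /andP [Hvr Hv2] /andP [Hwr Hw2].
  rewrite /tr; case: ifP => Hpv; case: ifP => Hpw.
  - case=> E2.
    have : v \in [set v2; w] by rewrite -E2 !inE eqxx orbT.
    by rewrite !inE (negbTE Hv2) /= => /eqP.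
  - by case=> E1; move: Hpw; rewrite -E1 eqxx.
  - by case=> E1; move: Hpv; rewrite E1 eqxx.
  - case=> E1 E2.
    have : v \in [set p (p w); w] by rewrite -E2 !inE eqxx orbT.
    rewrite !inE -E1 => /orP [/eqP E|/eqP //].
    by move: (Hpp v Hvr (negbT Hpv)); rewrite -E eqxx.
split.
  move=> t /imsetP [v]; rewrite inE => /andP [Hvr Hv2] ->.
  have /andP [Hev _] := Hp v Hvr.
  rewrite /tr; case: ifP => Hpv /=.
  - exists v2, v; split => //; first by rewrite eq_sym.
    by rewrite esym -(eqP Hpv).
  - exists (p (p v)), v; split => //; first exact: (Hpp v Hvr (negbT Hpv)).
      by have /andP [h _] := Hp (p v) (negbT Hpv); rewrite esym.
    by rewrite esym.
have Hup : forall n v, d v < n -> sorted e (up r v2 p n v) && cp T (up r v2 p n v).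
  elim => [|n IH] v Hdv //.
  case Hvr: (v == r).
    by rewrite (eqP Hvr) /= eqxx /= esym Hev2 /okt eqxx.
  have /andP [Hev Hd] := Hp v (negbT Hvr).
  have /andP [IH1 IH2] := IH (p v) (leq_trans Hd Hdv).
  case: n IH IH1 IH2 Hdv => [|m] IH IH1 IH2 Hdv; first by move: (leq_trans Hd Hdv).
  have Eu : up r v2 p m.+2 v = v :: up r v2 p m.+1 (p v) by rewrite /= Hvr.
  rewrite Eu.
  have [x [s' [Hs Hx]]] : exists x s', up r v2 p m.+1 (p v) = [:: p v, x & s'] /\ okt T v (p v) x.
    case Hpv: (p v == r).
      exists v2, [:: r]; rewrite (eqP Hpv) /= eqxx; split => //.
      rewrite /okt setUC; case Hvv2: (v == v2) => //=.
      by have := trS v (negbT Hvr) (negbT Hvv2); rewrite /tr Hpv.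
    have /andP [_ Hd2] := Hp (p v) (negbT Hpv).
    case: m IH IH1 IH2 Hdv Eu => [|k] IH IH1 IH2 Hdv Eu.
      by move: (leq_trans Hd2 (leq_trans Hd Hdv)).
    have [s2 Hs2] := up_head r v2 p k (p (p v)).
    have E2 : up r v2 p k.+2 (p v) = p v :: up r v2 p k.+1 (p (p v)) by rewrite /= Hpv.
    exists (p (p v)), s2; split; first by rewrite E2 Hs2.
    rewrite /okt setUC.
    have := trS v (negbT Hvr); rewrite /tr Hpv => ->; first by rewrite orbT.
    by apply/negP => /eqP E; move: Hpv; rewrite E Hp2 eqxx.
  rewrite Hs in IH1 IH2 *; rewrite cp3 Hx IH2 andbT.
  by move: IH1 => /= ->; rewrite Hev.
move=> u v.
pose A := up r v2 p (d u).+1 u; pose B := up r v2 p (d v).+1 v.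
have /andP [sA cA] := Hup (d u).+1 u (ltnSn _).
have /andP [sB cB] := Hup (d v).+1 v (ltnSn _).
have [A' HA'] := up_head r v2 p (d u) u.
have [B' HB'] := up_head r v2 p (d v) v.
have [sa Hsa] := up_suffix r v2 p (d u).+1 u.
have [sb Hsb] := up_suffix r v2 p (d v).+1 v.
have [q Hq] : exists q, sa ++ [:: r] = u :: q.
  move: HA'; rewrite Hsa; case: sa {Hsa} => [|y s] /=; case=> <- _.
    by exists [::].
  by exists (rcons s r); rewrite cats1.
have HA : up r v2 p (d u).+1 u = u :: q ++ [:: v2; r].
  by rewrite Hsa -cat_cons -Hq -catA.
have HrB : rev (up r v2 p (d v).+1 v) = [:: r, v2, r & rev sb].
  by rewrite Hsb rev_cat.
exists u, (q ++ [:: v2, r & rev sb]); split; last first.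
  apply/(cpP T u); apply: cp_glue; first by rewrite -HA.
  by move: (cp_rev cB); rewrite HrB cp3 => /andP [].
split => //.
  change (sorted e (u :: q ++ [:: v2, r & rev sb])).
  apply: sorted_glue; first by rewrite -HA.
  have : sorted e (rev (up r v2 p (d v).+1 v)).
    rewrite rev_sorted; move: sB; rewrite /sorted; case: (up _ _ _ _ _) => //= x s.
    by rewrite (@eq_path _ _ e) // => a b; rewrite esym.
  by rewrite HrB /= => /andP [].
have : last r (rev (up r v2 p (d v).+1 v)) = v by rewrite HB' rev_cons last_rcons.
by rewrite HrB /= last_cat /=.
Qed.

Theorem corollary2 (V : finType) (e : rel V) :
  simple_graph e -> graph_connected e -> 2 <= #|V| ->
  exists T : {set transition V},
    connecting_transition_set e T /\ #|T| = #|V| - 2.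
Proof.
move=> [esym eirr] Hconn HV.
have /card_gt0P [r _] : 0 < #|V| by lia.
pose P (v : V) : pred nat := fun n => [exists s : n.-tuple V, path e r s && (last r s == v)].
have Hex : forall v, exists n, P v n.
  move=> v; have /connectP [s Hs Hl] := Hconn r v.
  exists (size s); apply/existsP; exists (in_tuple s); by rewrite /= Hs Hl eqxx.
pose d v := ex_minn (Hex v).
have dmin : forall v s, path e r s -> last r s = v -> d v <= size s.
  move=> v s Hs Hl; rewrite /d; case: ex_minnP => m _; apply.
  by apply/existsP; exists (in_tuple s); rewrite /= Hs Hl eqxx.
have dspec : forall v, exists s, [/\ path e r s, last r s = v & size s = d v].
  move=> v; rewrite /d; case: ex_minnP => m /existsP [s /andP [Hs /eqP Hl]] _.
  by exists s; rewrite size_tuple.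
have d0 : forall v, d v = 0 -> v = r.
  move=> v Hv; have [s [_ Hl Hsz]] := dspec v; rewrite Hv in Hsz.
  by move: Hsz Hl; case: s.
have dpos : forall v, v != r -> exists w, e v w && (d w < d v).
  move=> v Hv; have [s [Hs Hl Hsz]] := dspec v.
  case/lastP: s Hs Hl Hsz => [|s y] Hs Hl Hsz.
    by move: Hv; rewrite -Hl eqxx.
  rewrite last_rcons in Hl; subst y; rewrite rcons_path in Hs.
  case/andP: Hs => Hs He; exists (last r s); rewrite esym He /=.
  by have := dmin _ s Hs erefl; rewrite -Hsz size_rcons.
pose p v := odflt r [pick w | e v w && (d w < d v)].
have Hp : forall v, v != r -> e v (p v) && (d (p v) < d v).
  move=> v Hv; rewrite /p; case: pickP => [w Hw|H] //=.
  by have [w Hw] := dpos v Hv; rewrite H in Hw.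
have [w Hw] : exists w : V, w != r.
  have : 0 < #|[set~ r]| by rewrite cardsC1; lia.
  by move/card_gt0P => [w]; rewrite !inE; exists w.
have /connectP [s Hs Hl] := Hconn r w.
case: s Hs Hl => [|y s] Hs Hl; first by move: Hw; rewrite Hl eqxx.
case/andP: Hs => Hry _.
have Hyr : y != r by apply/negP => /eqP E; move: Hry; rewrite E eirr.
have Hdy : d y <= 1 by have := dmin y [:: y]; rewrite /= Hry; apply.
have Hpy : p y = r.
  apply: d0; have /andP [_ h] := Hp y Hyr; lia.
apply: (@tree_lemma V e esym r y p d) => //.
by rewrite eq_sym.
Qed.
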